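(* Let $(\mathbf Y_i)_{i\in\mathbb N}$ be a $p$-dimensional stationary time series on a probability space on which, for each $m\in\mathbb N$, $\mathbf W_{1,m},\mathbf W_{2,m}$ are independent $p$-dimensional standard Brownian motions, such that the long-run covariance matrix $\Sigma=\mathrm{Cov}(\mathbf Y_1,\mathbf Y_1)+\sum_{i\ge2}\{\mathrm{Cov}(\mathbf Y_1,\mathbf Y_i)+\mathrm{Cov}(\mathbf Y_i,\mathbf Y_1)\}$ exists and is positive definite, and for some $0<\xi<\frac12$, $$\sup_{k>m}\frac{1}{(k-m)^\xi}\Big\|\sum_{i=m+1}^k\{\mathbf Y_i-\mathbb E(\mathbf Y_1)\}-\Sigma^{1/2}\mathbf W_{1,m}(k-m)\Big\|_2=O_{\mathbb P}(1),\quad\frac{1}{m^\xi}\Big\|\sum_{i=1}^m\{\mathbf Y_i-\mathbb E(\mathbf Y_1)\}-\Sigma^{1/2}\mathbf W_{2,m}(m)\Big\|_2=O_{\mathbb P}(1).$$ For $k\ge m+1$ define $$\tilde D_m(k)=\max_{j\in\{m,\dots,k-1\}}\frac{j(k-j)}{m^{3/2}}\|\bar{\mathbf Y}_{1:j}-\bar{\mathbf Y}_{j+1:k}\|_{\Sigma^{-1}},$$ $$\bar D_m(k)=\frac{1}{\sqrt m}\max_{j\in\{m,\dots,k-1\}}\Big\|\tfrac km\Sigma^{1/2}\{\mathbf W_{2,m}(m)+\mathbf W_{1,m}(j-m)\}-\tfrac jm\Sigma^{1/2}\{\mathbf W_{2,m}(m)+\mathbf W_{1,m}(k-m)\}\Big\|_{\Sigma^{-1}}.$$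 Then for any $\eta>0$, $\sup_{k>m}(m/k)^{\frac32+\eta}|\tilde D_m(k)-\bar D_m(k)|=o_{\mathbb P}(1)$ as $m\to\infty$.
   Context: $\bar{\mathbf Y}_{j:k}=\frac1{k-j+1}\sum_{i=j}^k\mathbf Y_i$. For $M$ positive definite, $\|\mathbf y\|_M=\sqrt{(\mathbf y^\top M\mathbf y)/p}$; $\|\cdot\|_2$ is the Euclidean norm; $\Sigma^{1/2}$ is the symmetric positive-definite square root. *)

(* Defs.v *)
From HB Require Import structures.
From mathcomp Require Import all_boot all_order all_algebra.
From mathcomp Require Import all_classical all_reals all_analysis.
From Stdlib Require List.
Set Implicit Arguments.
Unset Strict Implicit.
Unset Printing Implicit Defensive.
Import Order.TTheory GRing.Theory Num.Theory.
Import numFieldTopology.Exports.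
Local Open Scope classical_set_scope.
Local Open Scope ring_scope.

Section LinAlg.
Context {R : realType} {p : nat}.

Definition colv (f : 'I_p -> R) : 'cV[R]_p := \col_c f c.

Definition norm2 (v : 'cV[R]_p) : R := Num.sqrt (\sum_c (v c 0) ^+ 2).

Definition Mnorm (M : 'M[R]_p) (v : 'cV[R]_p) : R :=
  Num.sqrt (((v^T *m M *m v) 0 0) / p%:R).

Definition posdef (M : 'M[R]_p) : Prop :=
  M^T = M /\ forall v : 'cV[R]_p, v != 0 -> 0 < (v^T *m M *m v) 0 0.

Definition is_sqrt_pd (M S : 'M[R]_p) : Prop := posdef S /\ S *m S = M.

End LinAlg.

Section Prob.
Context {R : realType} {d : measure_display} {T : measurableType d}
  (P : probability T R).

Definition bigI (I : Type) (s : seq I) (F : I -> set T) : set T :=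
  \big[setI/setT]_(i <- s) F i.

Definition indep_rvs (I : eqType) (adm : I -> Prop) (X : I -> T -> R) : Prop :=
  forall (s : seq I), uniq s -> (forall i, i \in s -> adm i) ->
  forall (B : I -> set R), (forall i, measurable (B i)) ->
  P (bigI s (fun i => X i @^-1` B i)) =
  (\prod_(i <- s) P (X i @^-1` B i))%E.

(* mutual independence of families (groups) of real random variables:
   the product rule for events determined by finitely many variables of each
   group (measurable rectangles, which generate the sigma-algebras) *)
Definition indep_families (J : eqType) (I : J -> Type)
  (adm : forall j, I j -> Prop) (X : forall j, I j -> T -> R) : Prop :=
  forall (js : seq J), uniq js ->
  forall (F : forall j, seq (I j)) (B : forall j, I j -> set R),
  (forall j i, List.In i (F j) -> adm j i) ->
  (forall j i, measurable (B j i)) ->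
  let ev j := bigI (F j) (fun i => X j i @^-1` B j i) in
  P (bigI js ev) = (\prod_(j <- js) P (ev j))%E.

Definition std_BM1 (B : R -> T -> R) : Prop :=
  [/\ (forall t, 0 <= t -> measurable_fun setT (B t)),
      P [set w | B 0 w = 0] = 1%E,
      {ae P, forall w, {within [set t | 0 <= t], continuous (fun t => B t w)}},
      (forall (n : nat) (t : nat -> R), 0 <= t 0%N ->
         (forall l, (l < n)%N -> t l < t l.+1) ->
         indep_rvs (fun l : nat => (l < n)%N)
                   (fun l => B (t l.+1) \- B (t l)))
    & (forall s t, 0 <= s -> s < t -> forall A : set R, measurable A ->
         P ((B t \- B s) @^-1` A) = normal_prob 0 (Num.sqrt (t - s)) A)].

Definition std_BM {p : nat} (W : 'I_p -> R -> T -> R) : Prop :=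
  (forall c, std_BM1 (W c)) /\
  @indep_families 'I_p (fun _ => R) (fun _ t => 0 <= t) (fun c t => W c t).

Definition indep_std_BM {p : nat} (W1 W2 : 'I_p -> R -> T -> R) : Prop :=
  [/\ std_BM W1, std_BM W2 &
      @indep_families bool (fun _ => ('I_p * R)%type) (fun _ ct => 0 <= ct.2)
        (fun b ct => if b then W1 ct.1 ct.2 else W2 ct.1 ct.2)].

(* strict stationarity of (Y_i)_{i >= 1}: the finite-dimensional joint
   distributions (tested on measurable rectangles) are shift invariant *)
Definition stationary {p : nat} (Y : nat -> 'I_p -> T -> R) : Prop :=
  forall (s : seq (nat * 'I_p)) (B : nat * 'I_p -> set R) (h : nat),
  (forall x, measurable (B x)) -> (forall x, x \in s -> (1 <= x.1)%N) ->
  P (bigI s (fun x => Y x.1 x.2 @^-1` B x)) =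
  P (bigI s (fun x => Y (x.1 + h)%N x.2 @^-1` B x)).

Definition cov (X Z : T -> R) : R := fine (covariance P X Z).

(* Sigma = Cov(Y1,Y1) + sum_{i>=2} {Cov(Y1,Yi) + Cov(Yi,Y1)}, series converging *)
Definition long_run_cov {p : nat} (Y : nat -> 'I_p -> T -> R) (S : 'M[R]_p) : Prop :=
  forall a b : 'I_p,
  (fun n : nat => \sum_(2 <= i < n) (cov (Y 1%N a) (Y i b) + cov (Y i a) (Y 1%N b)))
    @ \oo --> S a b - cov (Y 1%N a) (Y 1%N b).

Definition meanv {p : nat} (Y : nat -> 'I_p -> T -> R) : 'cV[R]_p :=
  \col_c fine ('E_P[Y 1%N c])%E.

Definition OP1 (X : nat -> T -> \bar R) : Prop :=
  forall eps : R, 0 < eps -> exists M : R, exists m0 : nat, forall m : nat,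
  (m0 <= m)%N -> ((1 - eps)%:E <= P [set w | (X m w <= M%:E)%E])%E.

Definition oP1 (X : nat -> T -> \bar R) : Prop :=
  forall eps delta : R, 0 < eps -> 0 < delta -> exists m0 : nat, forall m : nat,
  (m0 <= m)%N -> ((1 - delta)%:E <= P [set w | (`|X m w| <= eps%:E)%E])%E.

End Prob.

Definition sup_after {R : realType} {T : Type} (m : nat) (f : nat -> T -> R) (w : T)
  : \bar R := ereal_sup [set (f k w)%:E | k in [set k : nat | (m < k)%N]].

Section Stats.
Context {R : realType} {T : Type} {p : nat}.

Definition Yv (Y : nat -> 'I_p -> T -> R) (i : nat) (w : T) : 'cV[R]_p :=
  colv (fun c => Y i c w).

Definition Wv (W : 'I_p -> R -> T -> R) (t : R) (w : T) : 'cV[R]_p :=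
  colv (fun c => W c t w).

Definition Ybar (Y : nat -> 'I_p -> T -> R) (j k : nat) (w : T) : 'cV[R]_p :=
  ((k - j + 1)%N%:R)^-1 *: \sum_(j <= i < k.+1) Yv Y i w.

Definition Dtilde (Y : nat -> 'I_p -> T -> R) (Sinv : 'M[R]_p) (m k : nat) (w : T) : R :=
  \big[Num.max/0]_(m <= j < k)
     ((j * (k - j))%N%:R / (m%:R `^ (3 / 2)) *
       Mnorm Sinv (Ybar Y 1 j w - Ybar Y j.+1 k w)).

Definition Dbar (Sh Sinv : 'M[R]_p) (W1m W2m : 'I_p -> R -> T -> R) (m k : nat)
  (w : T) : R :=
  (Num.sqrt m%:R)^-1 * \big[Num.max/0]_(m <= j < k)
     Mnorm Sinv ((k%:R / m%:R) *: (Sh *m (Wv W2m m%:R w + Wv W1m (j - m)%N%:R w))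
               - (j%:R / m%:R) *: (Sh *m (Wv W2m m%:R w + Wv W1m (k - m)%N%:R w))).

End Stats.

(* Main.v *)
Require Import Defs.
From HB Require Import structures.
From mathcomp Require Import all_boot all_order all_algebra.
From mathcomp Require Import all_classical all_reals all_analysis.
Import Order.TTheory GRing.Theory Num.Theory.
Local Open Scope classical_set_scope.
Local Open Scope ring_scope.
From mathcomp Require Import ring lra.
Section LA.
Context {R : realType} {p : nat}.
Implicit Types (M : 'M[R]_p) (u v : 'cV[R]_p).

Definition bf M u v : R := (u^T *m M *m v) 0 0.

Lemma bf_sym M u v : M^T = M -> bf M u v = bf M v u.
Proof.
move=> HM; rewrite /bf.
have -> : (u^T *m M *m v) 0 0 = ((u^T *m M *m v)^T) 0 0 by rewrite [RHS]mxE.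
by rewrite !trmx_mul HM trmxK mulmxA.
Qed.

Lemma bf_lin M s t u v w : bf M (s *: u + t *: v) w = s * bf M u w + t * bf M v w.
Proof.
by rewrite /bf linearD /= !linearZ /= mulmxDl mulmxDl -!scalemxAl !mxE.
Qed.

Lemma bf_linr M s t u v w : bf M w (s *: u + t *: v) = s * bf M w u + t * bf M w v.
Proof.
by rewrite /bf mulmxDr -!scalemxAr !mxE.
Qed.

Definition psd M := M^T = M /\ forall v, 0 <= bf M v v.

Lemma CS M u v : psd M -> bf M u v ^+ 2 <= bf M u u * bf M v v.
Proof.
move=> [Hs Hp].
have key : forall s t, 0 <= s^+2 * bf M u u + 2 * s * t * bf M u v + t^+2 * bf M v v.
  move=> s t; have := Hp (s *: u + t *: v).
  rewrite bf_lin !bf_linr (bf_sym M v u Hs).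
  by congr (0 <= _); ring.
have hu := Hp u; have hv := Hp v.
have [hv0|hvp] := eqVneq (bf M v v) 0.
  have := key (bf M u v) (- (bf M u u + 1)).
  rewrite hv0 mulr0 => H.
  have : bf M u v ^+ 2 * (bf M u u + 2) <= 0 by nra.
  move=> H2; rewrite mulr0; nra.
have hvp' : 0 < bf M v v by rewrite lt_def hvp hv.
have := key (bf M v v) (- bf M u v) => H.
nra.
Qed.

Definition rq M v := Num.sqrt (bf M v v).

Lemma rq_tri M u v : psd M -> rq M (u + v) <= rq M u + rq M v.
Proof.
move=> HM; have [Hs Hp] := HM.
have E : bf M (u + v) (u + v) = bf M u u + 2 * bf M u v + bf M v v.
  have := bf_lin M 1 1 u v (u + v); rewrite !scale1r => ->.
  have := bf_linr M 1 1 u v u; rewrite !scale1r => ->.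
  have := bf_linr M 1 1 u v v; rewrite !scale1r => ->.
  rewrite (bf_sym M v u Hs); ring.
have hu := Hp u; have hv := Hp v.
have a0 : 0 <= rq M u by exact: sqrtr_ge0.
have b0 : 0 <= rq M v by exact: sqrtr_ge0.
have a2 : rq M u ^+ 2 = bf M u u by rewrite sqr_sqrtr.
have b2 : rq M v ^+ 2 = bf M v v by rewrite sqr_sqrtr.
have cs := CS M u v HM.
have hb : bf M u v <= rq M u * rq M v.
  rewrite -a2 -b2 -exprMn in cs.
  have : 0 <= rq M u * rq M v by exact: mulr_ge0.
  nra.
rewrite /rq -[X in _ <= X]ger0_norm ?addr_ge0 // -sqrtr_sqr.
rewrite ler_sqrt; last by rewrite sqr_ge0.
rewrite E -[rq M u]/(rq M u) in a2 *.
rewrite /rq in a2 b2 hb *; nra.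
Qed.


Lemma bf0l M v : bf M 0 v = 0.
Proof. by rewrite /bf linear0 !mul0mx mxE. Qed.

Lemma rq_scale M c v : rq M (c *: v) = `|c| * rq M v.
Proof.
rewrite /rq.
have := bf_lin M c 0 v 0 (c *: v); rewrite scale0r addr0 bf0l mulr0 addr0 => ->.
have := bf_linr M c 0 v 0 v; rewrite scale0r addr0 => ->.
rewrite /bf mulmx0 mxE mul0r addr0 mulrA -expr2.
by rewrite sqrtrM ?sqr_ge0 // sqrtr_sqr.
Qed.

Lemma rq_N M v : rq M (- v) = rq M v.
Proof. by rewrite -scaleN1r rq_scale normrN normr1 mul1r. Qed.

Lemma rq_revtri M u v : psd M -> `|rq M u - rq M v| <= rq M (u - v).
Proof.
move=> HM; rewrite ler_norml; apply/andP; split.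
  have := rq_tri M (v - u) u HM; rewrite subrK -opprB rq_N; lra.
have := rq_tri M (u - v) v HM; rewrite subrK; lra.
Qed.

Lemma bfE M u v : bf M u v = \sum_j \sum_i u i 0 * M i j * v j 0.
Proof.
rewrite /bf mxE; apply: eq_bigr => j _; rewrite mxE mulr_suml.
by apply: eq_bigr => i _; rewrite mxE.
Qed.

Lemma sq_le_sum v (c : 'I_p) : (v c 0) ^+ 2 <= \sum_i (v i 0) ^+ 2.
Proof.
rewrite (bigD1 c) //= lerDl; apply: sumr_ge0 => i _; exact: sqr_ge0.
Qed.

Lemma rq_le M v : rq M v <= Num.sqrt (\sum_j \sum_i `|M i j|) * norm2 v.
Proof.
rewrite /rq /norm2 -sqrtrM; last by apply: sumr_ge0 => j _; apply: sumr_ge0.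
apply: ler_wsqrtr.
rewrite bfE mulr_suml; apply: ler_sum => j _; rewrite mulr_suml.
apply: ler_sum => i _.
set N := \sum_i _.
have hi := sq_le_sum v i; have hj := sq_le_sum v j.
have h1 : `|v i 0 * v j 0| <= N.
  rewrite normrM.
  have : 2 * (`|v i 0| * `|v j 0|) <= `|v i 0| ^+ 2 + `|v j 0| ^+ 2.
    have := sqr_ge0 (`|v i 0| - `|v j 0|); nra.
  rewrite !real_normK ?num_real // => H; rewrite /N; lra.
apply: le_trans (ler_norm _) _.
rewrite mulrAC normrM normrM [`|M i j| * _]mulrC -normrM.
by apply: ler_wpM2r.
Qed.

Lemma psd_inv (S : 'M[R]_p) : posdef S -> psd (invmx S).
Proof.
move=> [Hs Hp].
have Hps : psd S.
  split=> // v; have [->|nz] := eqVneq v 0; first by rewrite bf0l.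
  exact/ltW/Hp.
have [U|NU] := boolP (S \in unitmx); last by rewrite invmx_out.
split; first by rewrite trmx_inv Hs.
move=> v; set w := invmx S *m v.
have -> : v = S *m w by rewrite /w mulKVmx.
rewrite /bf /w trmx_mul Hs !mulmxA mulmxKV //.
rewrite -mulmxA; exact: (Hps.2 (invmx S *m v)).
Qed.


Definition Cst M : R := Num.sqrt (\sum_j \sum_i `|M i j|) * Num.sqrt (p%:R^-1).

Lemma Mnorm_rq M v : psd M -> Mnorm M v = rq M v * Num.sqrt (p%:R^-1).
Proof. by move=> [_ Hp]; rewrite /Mnorm /rq -sqrtrM. Qed.

Lemma Mnorm_scale M c v : psd M -> Mnorm M (c *: v) = `|c| * Mnorm M v.
Proof. by move=> H; rewrite !Mnorm_rq // rq_scale mulrA. Qed.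

Lemma Mnorm_tri M u v : psd M -> Mnorm M (u + v) <= Mnorm M u + Mnorm M v.
Proof.
move=> H; rewrite !Mnorm_rq // -mulrDl.
apply: ler_wpM2r; [exact: sqrtr_ge0| exact: rq_tri].
Qed.

Lemma Mnorm_revtri M u v : psd M -> `|Mnorm M u - Mnorm M v| <= Mnorm M (u - v).
Proof.
move=> H; rewrite !Mnorm_rq // -mulrBl normrM [`|Num.sqrt _|]ger0_norm ?sqrtr_ge0 //.
apply: ler_wpM2r; [exact: sqrtr_ge0| exact: rq_revtri].
Qed.

Lemma Mnorm_le M v : psd M -> Mnorm M v <= Cst M * norm2 v.
Proof.
move=> H; rewrite Mnorm_rq // /Cst [in leRHS]mulrAC.
apply: ler_wpM2r; [exact: sqrtr_ge0| exact: rq_le].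
Qed.

Lemma Cst_ge0 M : 0 <= Cst M.
Proof. by rewrite /Cst mulr_ge0 ?sqrtr_ge0. Qed.

Lemma norm2_ge0 v : 0 <= norm2 v.
Proof. exact: sqrtr_ge0. Qed.

End LA.

Lemma bigmax_diff {R : realType} (F G : nat -> R) (s b : R) (m k : nat) :
  0 <= s -> 0 <= b ->
  (forall j, (m <= j < k)%N -> `|F j - s * G j| <= b) ->
  `|\big[Num.max/0]_(m <= j < k) F j - s * \big[Num.max/0]_(m <= j < k) G j| <= b.
Proof.
move=> s0 b0 H.
rewrite (big_nat_cond _ _ _ _ (fun _ => true)) (big_nat_cond _ _ _ _ (fun _ => true)).
apply: (big_ind2 (fun x y => `|x - s * y| <= b)).
- by rewrite mulr0 subr0 normr0.
- move=> x1 x2 y1 y2 h1 h2; rewrite maxr_pMr //.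
  case: (leP x1 y1) => hxy; case: (leP (s * x2) (s * y2)) => hs.
  + done.
  + move: h1 h2; rewrite !ler_norml => /andP[a1 a2] /andP[b1 b2].
    apply/andP; split; lra.
  + move: h1 h2; rewrite !ler_norml => /andP[a1 a2] /andP[b1 b2].
    apply/andP; split; lra.
  + done.
- by move=> j /andP[hj _]; apply: H.
Qed.

Lemma ybar_id {R : realType} {T : Type} {p : nat} (Y : nat -> 'I_p -> T -> R) (w : T)
  (mu : 'cV[R]_p) (j k : nat) : (1 <= j < k)%N ->
  (j * (k - j))%N%:R *: (Ybar Y 1 j w - Ybar Y j.+1 k w) =
  k%:R *: \sum_(1 <= i < j.+1) (Yv Y i w - mu)
  - j%:R *: \sum_(1 <= i < k.+1) (Yv Y i w - mu).
Proof.
move=> /andP[j1 jk].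
have split : \sum_(1 <= i < k.+1) Yv Y i w =
  \sum_(1 <= i < j.+1) Yv Y i w + \sum_(j.+1 <= i < k.+1) Yv Y i w.
  by rewrite (@big_cat_nat _ _ _ j.+1) //= ltnS ltnW.
rewrite /Ybar !sumrB !sumr_const_nat split.
have e1 : (j.+1 - 1 + 1 = j.+1)%N by rewrite subn1 addn1.
have e2 : (j - 1 + 1 = j)%N by rewrite subnK.
have e3 : (k - j.+1 + 1 = k - j)%N by rewrite addn1 subnSK.
have e4 : (j.+1 - 1 = j)%N by rewrite subn1.
rewrite e2 e3 e4.
set A := \sum_(1 <= i < j.+1) _.
set B := \sum_(j.+1 <= i < k.+1) _.
have hj : (j%:R : R) != 0 by rewrite pnatr_eq0 -lt0n.
have hkj : ((k - j)%N%:R : R) != 0 by rewrite pnatr_eq0 -lt0n subn_gt0.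
have ekj : ((k - j)%N%:R : R) = k%:R - j%:R by rewrite natrB // ltnW.
have ek1 : (k.+1 - 1 = k)%N by rewrite subn1.
rewrite ek1.
rewrite -[mu *+ j]scaler_nat -[mu *+ k]scaler_nat.
apply/matrixP => a b; rewrite !mxE.
rewrite natrM ekj in hkj *.
by field; rewrite hkj hj.
Qed.

Lemma Mnorm0 {R : realType} {p : nat} (M : 'M[R]_p) : Mnorm M 0 = 0.
Proof. by rewrite /Mnorm mulmx0 mxE mul0r sqrtr0. Qed.

Lemma pow32 {R : realType} (x : R) : 0 <= x -> x `^ (3 / 2) = x * Num.sqrt x.
Proof.
move=> x0; have -> : (3 / 2 : R) = 1 + 2^-1 by field.
have [->|xn0] := eqVneq x 0.
  by rewrite powR0 ?mul0r // paddr_eq0 ?invr_ge0 // oner_eq0.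
by rewrite powRD ?xn0 ?implybT // powRr1 // powR12_sqrt.
Qed.

Lemma det_bound {R : realType} {T : Type} {p : nat} (Y : nat -> 'I_p -> T -> R)
  (W1m W2m : 'I_p -> R -> T -> R) (Sh Sinv : 'M[R]_p) (mu : 'cV[R]_p) (w : T)
  (m k : nat) (B1 B2 : R) :
  psd Sinv -> (1 <= m < k)%N -> 0 <= B1 -> 0 <= B2 ->
  Wv W1m 0 w = 0 ->
  norm2 (\sum_(1 <= i < m.+1) (Yv Y i w - mu) - Sh *m Wv W2m m%:R w) <= B2 ->
  (forall j, (m < j <= k)%N ->
     norm2 (\sum_(m.+1 <= i < j.+1) (Yv Y i w - mu) - Sh *m Wv W1m (j - m)%N%:R w) <= B1) ->
  `|Dtilde Y Sinv m k w - Dbar Sh Sinv W1m W2m m k w|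
    <= (m%:R `^ (3 / 2))^-1 * (2 * k%:R * (Cst Sinv * (B1 + B2))).
Proof.
move=> HS /andP[m1 mk] hB1 hB2 W0 hE2 hE1.
set X := fun j => \sum_(1 <= i < j.+1) (Yv Y i w - mu).
set V := fun j => Sh *m (Wv W2m m%:R w + Wv W1m (j - m)%N%:R w).
have hD : forall j, (m <= j <= k)%N -> Mnorm Sinv (X j - V j) <= Cst Sinv * (B1 + B2).
  move=> j /andP[mj jk].
  have -> : X j - V j = (\sum_(1 <= i < m.+1) (Yv Y i w - mu) - Sh *m Wv W2m m%:R w)
     + (\sum_(m.+1 <= i < j.+1) (Yv Y i w - mu) - Sh *m Wv W1m (j - m)%N%:R w).
    rewrite /X /V (@big_cat_nat _ _ _ m.+1) //= mulmxDr.
    by rewrite opprD !addrA; congr (_ + _); rewrite -!addrA; congr (_ + _); rewrite addrC.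
  apply: le_trans (Mnorm_tri _ _ _ HS) _.
  rewrite mulrDr [Cst Sinv * B1 + _]addrC; apply: lerD.
    apply: le_trans (Mnorm_le _ _ HS) _; apply: ler_wpM2l; [exact: Cst_ge0|exact: hE2].
  have [ejm|ltmj] := eqVneq j m.
    rewrite ejm big_geq // subnn W0 mulmx0 subr0 Mnorm0.
    by apply: mulr_ge0; [exact: Cst_ge0|].
  apply: le_trans (Mnorm_le _ _ HS) _; apply: ler_wpM2l; [exact: Cst_ge0|].
  by apply: hE1; rewrite jk andbT ltn_neqAle eq_sym ltmj.
have m0 : (0 : R) < m%:R by rewrite ltr0n.
have c0 : 0 <= (m%:R `^ (3 / 2) : R)^-1 by rewrite invr_ge0 powR_ge0.
rewrite /Dtilde /Dbar; apply: bigmax_diff.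
- by rewrite invr_ge0 sqrtr_ge0.
- by apply: mulr_ge0 => //; apply: mulr_ge0; [apply: mulr_ge0|apply: mulr_ge0; [exact: Cst_ge0|exact: addr_ge0]].
move=> j /andP[mj jk].
have j1 : (1 <= j < k)%N by rewrite jk andbT (leq_trans m1 mj).
have hF : (j * (k - j))%N%:R / (m%:R `^ (3 / 2)) * Mnorm Sinv (Ybar Y 1 j w - Ybar Y j.+1 k w)
   = (m%:R `^ (3 / 2))^-1 * Mnorm Sinv (k%:R *: X j - j%:R *: X k).
  rewrite -(ybar_id Y w mu j k j1) Mnorm_scale // ger0_norm ?ler0n //; lra.
have hG : (Num.sqrt m%:R)^-1 * Mnorm Sinv ((k%:R / m%:R) *: (Sh *m (Wv W2m m%:R w + Wv W1m (j - m)%N%:R w))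
               - (j%:R / m%:R) *: (Sh *m (Wv W2m m%:R w + Wv W1m (k - m)%N%:R w)))
   = (m%:R `^ (3 / 2))^-1 * Mnorm Sinv (k%:R *: V j - j%:R *: V k).
  have -> : (k%:R / m%:R) *: V j - (j%:R / m%:R) *: V k = (m%:R)^-1 *: (k%:R *: V j - j%:R *: V k).
    by rewrite scalerBr !scalerA ![_^-1 * _]mulrC.
  rewrite Mnorm_scale // ger0_norm ?invr_ge0 ?ler0n // pow32 ?ler0n // invfM mulrA [_^-1 * _^-1]mulrC //.
rewrite hF hG -mulrBr normrM ger0_norm //; apply: ler_wpM2l => //.
apply: le_trans (Mnorm_revtri _ _ _ HS) _.
have -> : k%:R *: X j - j%:R *: X k - (k%:R *: V j - j%:R *: V k)
   = k%:R *: (X j - V j) + (- j%:R) *: (X k - V k).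
  by apply/matrixP => a b; rewrite !mxE; ring.
apply: le_trans (Mnorm_tri _ _ _ HS) _.
rewrite !Mnorm_scale // normrN !ger0_norm ?ler0n //.
have h1 := hD j (introT andP (conj mj (ltnW jk))).
have h2 := hD k (introT andP (conj (ltnW mk) (leqnn k))).
have hjk : (j%:R : R) <= k%:R by rewrite ler_nat ltnW.
have hC : 0 <= Cst Sinv * (B1 + B2) by apply: mulr_ge0; [exact: Cst_ge0|exact: addr_ge0].
have hk0 : (0 : R) <= k%:R by rewrite ler0n.
have hj0 : (0 : R) <= j%:R by rewrite ler0n.
set D1 := Mnorm Sinv (X j - V j) in h1 *.
set D2 := Mnorm Sinv (X k - V k) in h2 *.
set C := Cst Sinv * (B1 + B2) in hC h1 h2 *.
nra.
Qed.

Import numFieldTopology.Exports.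
Section Meas.
Context {R : realType} {d : measure_display} {T : measurableType d}.
Local Notation mf f := (measurable_fun [set: T] (f : T -> R)).

Lemma mf_cst (c : R) : mf (fun _ => c).
Proof. exact: measurable_cst. Qed.
Lemma mf_add (f g : T -> R) : mf f -> mf g -> mf (fun w => f w + g w).
Proof. exact: measurable_realfun.measurable_funD. Qed.
Lemma mf_sub (f g : T -> R) : mf f -> mf g -> mf (fun w => f w - g w).
Proof. exact: measurable_realfun.measurable_funB. Qed.
Lemma mf_mul (f g : T -> R) : mf f -> mf g -> mf (fun w => f w * g w).
Proof. exact: measurable_realfun.measurable_funM. Qed.
Lemma mf_sqr (f : T -> R) : mf f -> mf (fun w => f w ^+ 2).
Proof.
move=> h; rewrite (_ : (fun w => f w ^+ 2) = (fun w => f w * f w)); first exact: mf_mul.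
by apply: funext => w; rewrite expr2.
Qed.
Lemma mf_max (f g : T -> R) : mf f -> mf g -> mf (fun w => Num.max (f w) (g w)).
Proof. exact: measurable_realfun.measurable_maxr. Qed.
Lemma mf_comp (h : R -> R) (f : T -> R) : continuous h -> mf f -> mf (fun w => h (f w)).
Proof.
move=> ch mf0; apply: (measurableT_comp (f := h)) => //.
exact: measurable_realfun.continuous_measurable_fun.
Qed.
Lemma mf_sqrt (f : T -> R) : mf f -> mf (fun w => Num.sqrt (f w)).
Proof. apply: mf_comp; exact: sqrt_continuous. Qed.
Lemma mf_abs (f : T -> R) : mf f -> mf (fun w => `|f w|).
Proof. apply: mf_comp => x; exact: norm_continuous. Qed.
Lemma mf_sum (I : eqType) (r : seq I) (F : I -> T -> R) :
  (forall i, i \in r -> mf (F i)) -> mf (fun w => \sum_(i <- r) F i w).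
Proof.
elim: r => [|a r IH] H.
  by rewrite (_ : (fun w => _) = fun _ => 0); [exact: mf_cst| apply: funext => w; rewrite big_nil].
rewrite (_ : (fun w => _) = fun w => F a w + \sum_(i <- r) F i w).
  apply: mf_add; first by apply: H; rewrite mem_head.
  by apply: IH => i hi; apply: H; rewrite in_cons hi orbT.
by apply: funext => w; rewrite big_cons.
Qed.
Lemma mf_bigmax (I : eqType) (r : seq I) (F : I -> T -> R) :
  (forall i, i \in r -> mf (F i)) -> mf (fun w => \big[Num.max/0]_(i <- r) F i w).
Proof.
elim: r => [|a r IH] H.
  by rewrite (_ : (fun w => _) = fun _ => 0); [exact: mf_cst| apply: funext => w; rewrite big_nil].
rewrite (_ : (fun w => _) = fun w => Num.max (F a w) (\big[Num.max/0]_(i <- r) F i w)).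
  apply: mf_max; first by apply: H; rewrite mem_head.
  by apply: IH => i hi; apply: H; rewrite in_cons hi orbT.
by apply: funext => w; rewrite big_cons.
Qed.

Definition mfv {a b : nat} (F : T -> 'M[R]_(a, b)) := forall i j, mf (fun w => F w i j).

Lemma mfv_add a b (F G : T -> 'M[R]_(a, b)) : mfv F -> mfv G -> mfv (fun w => F w + G w).
Proof.
move=> hF hG i j; rewrite (_ : (fun w => _) = fun w => F w i j + G w i j); first exact: mf_add.
by apply: funext => w; rewrite mxE.
Qed.
Lemma mfv_sub a b (F G : T -> 'M[R]_(a, b)) : mfv F -> mfv G -> mfv (fun w => F w - G w).
Proof.
move=> hF hG i j; rewrite (_ : (fun w => _) = fun w => F w i j - G w i j); first exact: mf_sub.
by apply: funext => w; rewrite !mxE.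
Qed.
Lemma mfv_scale a b (c : R) (F : T -> 'M[R]_(a, b)) : mfv F -> mfv (fun w => c *: F w).
Proof.
move=> hF i j; rewrite (_ : (fun w => _) = fun w => c * F w i j); first exact: mf_mul (mf_cst _) (hF _ _).
by apply: funext => w; rewrite mxE.
Qed.
Lemma mfv_cst a b (C : 'M[R]_(a, b)) : mfv (fun _ => C).
Proof. move=> i j; exact: mf_cst. Qed.
Lemma mfv_mull a b c (C : 'M[R]_(a, b)) (F : T -> 'M[R]_(b, c)) : mfv F -> mfv (fun w => C *m F w).
Proof.
move=> hF i j; rewrite (_ : (fun w => _) = fun w => \sum_l C i l * F w l j).
  by apply: mf_sum => l _; apply: mf_mul; [exact: mf_cst|exact: hF].
by apply: funext => w; rewrite mxE.
Qed.
Lemma mfv_sum a b (I : eqType) (r : seq I) (F : I -> T -> 'M[R]_(a, b)) :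
  (forall i, i \in r -> mfv (F i)) -> mfv (fun w => \sum_(i <- r) F i w).
Proof.
move=> H i j; rewrite (_ : (fun w => _) = fun w => \sum_(l <- r) F l w i j).
  by apply: mf_sum => l hl; exact: H.
by apply: funext => w; rewrite summxE.
Qed.
Lemma mfv_colv p (f : 'I_p -> T -> R) : (forall c, mf (f c)) -> mfv (fun w => colv (fun c => f c w)).
Proof.
move=> H i j; rewrite (_ : (fun w => _) = f i); first exact: H.
by apply: funext => w; rewrite mxE.
Qed.

Lemma mf_Mnorm p (M : 'M[R]_p) (F : T -> 'cV[R]_p) : mfv F -> mf (fun w => Mnorm M (F w)).
Proof.
move=> hF; apply: mf_sqrt; apply: mf_mul; last exact: mf_cst.
rewrite (_ : (fun w => _) = fun w => \sum_j \sum_i F w i 0 * M i j * F w j 0).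
  apply: mf_sum => j _; apply: mf_sum => i _; apply: mf_mul; last exact: hF.
  by apply: mf_mul; [exact: hF|exact: mf_cst].
by apply: funext => w; rewrite -[LHS]/(bf M (F w) (F w)) bfE.
Qed.

Lemma mf_norm2 p (F : T -> 'cV[R]_p) : mfv F -> mf (fun w => norm2 (F w)).
Proof.
move=> hF; apply: mf_sqrt; apply: mf_sum => c _; apply: mf_sqr; exact: hF.
Qed.

End Meas.

Section Pr.
Context {R : realType} {d : measure_display} {T : measurableType d} (P : probability T R).

Lemma Pfin A : measurable A -> P A = (fine (P A))%:E.
Proof. by move=> mA; rewrite fineK // fin_num_measure. Qed.

Lemma probI2 A B (x y : R) : measurable A -> measurable B ->
  ((1 - x)%:E <= P A)%E -> ((1 - y)%:E <= P B)%E -> ((1 - (x + y))%:E <= P (A `&` B))%E.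
Proof.
move=> mA mB hA hB.
have mU : measurable (A `|` B) by exact: measurableU.
have mI : measurable (A `&` B) by exact: measurableI.
have hU := probability_le1 P mU.
have E : P (A `|` B) = (P A + P B - P (A `&` B))%E.
  apply: measureUfinl => //; exact: (le_lt_trans (probability_le1 P mA) (ltry 1)).
move: E; rewrite (Pfin _ mU) [P A](Pfin _ mA) [P B](Pfin _ mB) [P (A `&` B)](Pfin _ mI).
move=> E'.
have E : fine (P (A `|` B)) = fine (P A) + fine (P B) - fine (P (A `&` B)).
  by apply: EFin_inj; rewrite E' EFinB EFinD.
rewrite (Pfin _ mA) in hA; rewrite (Pfin _ mB) in hB; rewrite (Pfin _ mU) in hU.
rewrite (Pfin _ mI).
rewrite lee_fin in hA; rewrite lee_fin in hB; rewrite lee_fin in hU; rewrite lee_fin.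
lra.
Qed.

Lemma prob_all (I : eqType) (s : seq I) (A : I -> set T) :
  (forall i, measurable (A i)) -> (forall i, P (A i) = 1%E) ->
  measurable [set w | forall i, i \in s -> A i w] /\
  ((1 - 0)%:E <= P [set w | forall i, i \in s -> A i w])%E.
Proof.
move=> mA PA; elim: s => [|a s [IHm IHp]].
  rewrite (_ : [set w | _] = setT); last by apply/seteqP; split => w //= _ i.
  by rewrite probability_setT subr0; split.
have -> : [set w | forall i, i \in a :: s -> A i w] = A a `&` [set w | forall i, i \in s -> A i w].
  apply/seteqP; split => w /=.
    by move=> H; split; [apply: H; rewrite mem_head| move=> i hi; apply: H; rewrite in_cons hi orbT].
  by move=> [ha hs] i; rewrite in_cons => /orP[/eqP->|/hs].
split; first exact: measurableI.
have -> : ((1 - 0)%:E : \bar R) = (1 - (0 + 0))%:E by rewrite addr0.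
apply: probI2 => //.
by rewrite PA subr0.
Qed.

End Pr.

Lemma sup_after_le {R : realType} {T : Type} (m : nat) (f : nat -> T -> R) (w : T) (x : R) :
  (sup_after m f w <= x%:E)%E <-> (forall k, (m < k)%N -> f k w <= x).
Proof.
rewrite /sup_after; split.
  move=> H k mk; rewrite -lee_fin; apply: le_trans H.
  by apply: ereal_sup_ubound; exists k.
move=> H; apply: ub_ereal_sup => _ [k mk <-]; rewrite lee_fin; exact: H.
Qed.

Lemma sup_after_ge0 {R : realType} {T : Type} (m : nat) (f : nat -> T -> R) (w : T) :
  (forall k, 0 <= f k w) -> (0 <= sup_after m f w)%E.
Proof.
move=> H; rewrite /sup_after; apply: le_trans (_ : (f m.+1 w)%:E <= _)%E.
  by rewrite lee_fin H.
by apply: ereal_sup_ubound; exists m.+1 => //=; rewrite ltnSn.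
Qed.

Lemma pow_final {R : realType} (m k xi eta Q : R) :
  1 <= m -> m <= k -> 0 < xi -> xi < 1 / 2 -> 0 < eta -> 0 <= Q ->
  (m / k) `^ (3 / 2 + eta) * ((m `^ (3 / 2))^-1 * (2 * k * (Q * k `^ xi)))
   <= 2 * Q * (m `^ (1 / 2 - xi))^-1.
Proof.
move=> m1 mk x0 x1 e0 Q0.
have m0 : 0 < m by lra.
have k0 : 0 < k by lra.
have mkp : 0 < m / k by apply: divr_gt0.
have mk1 : m / k <= 1 by rewrite ler_pdivrMr // mul1r.
set b := 1 + xi.
have F1 : (m / k) `^ (3 / 2 + eta) = (m / k) `^ (3 / 2 + eta - b) * (m / k) `^ b.
  by rewrite -powRD ?subrK // (gt_eqF mkp) implybT.
have F2 : (m / k) `^ b * k `^ b = m `^ b.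
  by rewrite -powRM ?ltW // mulrVK // unitfE gt_eqF.
have F3 : k * k `^ xi = k `^ b.
  by rewrite /b powRD ?(gt_eqF k0) ?implybT // powRr1 // ltW.
have F4 : m `^ (3 / 2) = m `^ b * m `^ (1 / 2 - xi).
  rewrite -powRD ?(gt_eqF m0) ?implybT //; congr (_ `^ _); by rewrite /b; field.
have u0 : 0 <= (m / k) `^ (3 / 2 + eta - b) by exact: powR_ge0.
have u1 : (m / k) `^ (3 / 2 + eta - b) <= 1.
  have hc : 0 <= 3 / 2 + eta - b by rewrite /b; lra.
  have hx : m / k \is Num.nneg by rewrite nnegrE ltW.
  have hy : (1:R) \is Num.nneg by rewrite nnegrE.
  by have := @ge0_ler_powR R _ hc (m / k) 1 hx hy mk1; rewrite powR1.
have z0 : 0 < m `^ (1 / 2 - xi) by exact: powR_gt0.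
have mb0 : 0 < m `^ b by exact: powR_gt0.
rewrite F1 F4.
set u := (m / k) `^ (3 / 2 + eta - b) in u0 u1 *.
set z := m `^ (1 / 2 - xi) in z0 *.
set v := (m / k) `^ b in F2 *.
have -> : u * v * ((m `^ b * z)^-1 * (2 * k * (Q * k `^ xi)))
   = u * (v * (k * k `^ xi)) * 2 * Q / (m `^ b * z) by rewrite mulrC; field;
     rewrite ?gt_eqF.
rewrite F3 F2.
have -> : u * m `^ b * 2 * Q / (m `^ b * z) = u * (2 * Q / z).
  by field; rewrite !gt_eqF.
have hq : 0 <= 2 * Q / z by apply: divr_ge0; [lra|exact: ltW].
rewrite -[X in _ <= X]mul1r -[2 * Q * _]/(2 * Q / z); exact: ler_wpM2r.
Qed.

Lemma pow_eventually {R : realType} (xi Q eps : R) :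
  0 < xi -> xi < 1 / 2 -> 0 <= Q -> 0 < eps ->
  exists N : nat, forall m : nat, (N <= m)%N -> 2 * Q * (m%:R `^ (1 / 2 - xi))^-1 <= eps.
Proof.
move=> x0 x1 Q0 e0.
set s := 1 / 2 - xi.
have s0 : 0 < s by rewrite /s; lra.
set t := (2 * Q / eps) `^ (s^-1).
exists (Num.Def.trunc t).+1 => m hm.
have tm : t < m%:R.
  apply: lt_le_trans (truncnS_gt t) _; by rewrite ler_nat.
have t0 : 0 <= t by exact: powR_ge0.
have hm0 : 0 < m%:R :> R by lra.
have zs : 2 * Q / eps <= m%:R `^ s.
  have -> : 2 * Q / eps = t `^ s.
    by rewrite /t -powRrM mulVf ?gt_eqF // powRr1 // divr_ge0 //; lra.
  by apply: ge0_ler_powR; [exact: ltW|rewrite nnegrE|rewrite nnegrE ltW|exact: ltW].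
have z0 : 0 < m%:R `^ s by exact: powR_gt0.
rewrite -/s ler_pdivrMr //.
by move: zs; rewrite ler_pdivrMr // [_ * eps]mulrC.
Qed.

Theorem lemmaA1 (R : realType) (d : measure_display) (T : measurableType d)
  (P : probability T R) (p : nat) (Y : nat -> 'I_p -> T -> R)
  (W1 W2 : nat -> 'I_p -> R -> T -> R) (Sigma Sh : 'M[R]_p) (xi : R) :
  (forall i c, (1 <= i)%N -> measurable_fun setT (Y i c)) ->
  (forall i c, (1 <= i)%N -> P.-integrable setT (fun w => (Y i c w)%:E)) ->
  (forall i c, (1 <= i)%N -> P.-integrable setT (fun w => (Y i c w ^+ 2)%:E)) ->
  stationary P Y ->
  (forall m : nat, indep_std_BM P (W1 m) (W2 m)) ->
  long_run_cov P Y Sigma ->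
  posdef Sigma ->
  is_sqrt_pd Sigma Sh ->
  0 < xi < 1 / 2 ->
  OP1 P (fun m => sup_after m (fun k w =>
     ((k - m)%N%:R `^ xi)^-1 *
     norm2 (\sum_(m.+1 <= i < k.+1) (Yv Y i w - meanv P Y)
            - Sh *m Wv (W1 m) (k - m)%N%:R w))) ->
  OP1 P (fun m w => ((m%:R `^ xi)^-1 *
     norm2 (\sum_(1 <= i < m.+1) (Yv Y i w - meanv P Y)
            - Sh *m Wv (W2 m) m%:R w))%:E) ->
  forall eta : R, 0 < eta ->
  oP1 P (fun m => sup_after m (fun k w =>
     (m%:R / k%:R) `^ (3 / 2 + eta) *
     `|Dtilde Y (invmx Sigma) m k w - Dbar Sh (invmx Sigma) (W1 m) (W2 m) m k w|)).
Proof.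
move=> HYm _ _ _ HW _ HS _ /andP[xi0 xi1] H1 H2 eta eta0.
have HSinv : psd (invmx Sigma) := psd_inv Sigma HS.
move=> eps delta eps0 delta0.
have d2 : 0 < delta / 2 by rewrite divr_gt0.
have [M1 [m1 HM1]] := H1 (delta / 2) d2.
have [M2 [m2 HM2]] := H2 (delta / 2) d2.
set Q := Cst (invmx Sigma) * (`|M1| + `|M2|).
have Q0 : 0 <= Q by apply: mulr_ge0; [exact: Cst_ge0|exact: addr_ge0].
have [N HN] := @pow_eventually R xi Q eps xi0 xi1 Q0 eps0.
exists (maxn (maxn m1 m2) (maxn N 1)) => m hm.
rewrite !geq_max in hm; case/andP: hm => /andP[hm1 hm2] /andP[hmN hmone].
have [[HB1 _] [HB2 _] _] := HW m.
have mW1 : forall c t, 0 <= t -> measurable_fun setT (W1 m c t).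
  by move=> c t t0; have [h _ _ _ _] := HB1 c; exact: h.
have mW2 : forall c t, 0 <= t -> measurable_fun setT (W2 m c t).
  by move=> c t t0; have [h _ _ _ _] := HB2 c; exact: h.
have mfY : forall i, (1 <= i)%N -> mfv (fun w => Yv Y i w).
  by move=> i hi; rewrite /Yv; apply: mfv_colv => c; exact: HYm.
have mfW1 : forall t, 0 <= t -> mfv (fun w => Wv (W1 m) t w).
  by move=> t t0; rewrite /Wv; apply: mfv_colv => c; exact: mW1.
have mfW2 : forall t, 0 <= t -> mfv (fun w => Wv (W2 m) t w).
  by move=> t t0; rewrite /Wv; apply: mfv_colv => c; exact: mW2.
have mfS : forall a b, (1 <= a)%N -> mfv (fun w => \sum_(a <= i < b) (Yv Y i w - meanv P Y)).
  move=> a b a1; apply: mfv_sum => i; rewrite mem_index_iota => /andP[ai _].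
  by apply: mfv_sub; [apply: mfY; exact: leq_trans ai|exact: mfv_cst].
have mfYb : forall a b, (1 <= a)%N -> mfv (fun w => Ybar Y a b w).
  move=> a b a1; rewrite /Ybar; apply: mfv_scale; apply: mfv_sum => i.
  by rewrite mem_index_iota => /andP[ai _]; apply: mfY; exact: leq_trans ai.
pose f1 := fun k w => ((k - m)%N%:R `^ xi)^-1 *
     norm2 (\sum_(m.+1 <= i < k.+1) (Yv Y i w - meanv P Y)
            - Sh *m Wv (W1 m) (k - m)%N%:R w).
pose g2 := fun w => (m%:R `^ xi)^-1 *
     norm2 (\sum_(1 <= i < m.+1) (Yv Y i w - meanv P Y) - Sh *m Wv (W2 m) m%:R w).
pose gk := fun k w => (m%:R / k%:R) `^ (3 / 2 + eta) *
     `|Dtilde Y (invmx Sigma) m k w - Dbar Sh (invmx Sigma) (W1 m) (W2 m) m k w|.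
have mf1 : forall k, measurable_fun setT (f1 k).
  move=> k; apply: mf_mul; first exact: mf_cst.
  apply: mf_norm2; apply: mfv_sub; first exact: mfS.
  by apply: mfv_mull; apply: mfW1; exact: ler0n.
have mg2 : measurable_fun setT g2.
  apply: mf_mul; first exact: mf_cst.
  apply: mf_norm2; apply: mfv_sub; first exact: mfS.
  by apply: mfv_mull; apply: mfW2; exact: ler0n.
have mgk : forall k, measurable_fun setT (gk k).
  move=> k; apply: mf_mul; first exact: mf_cst.
  apply: mf_abs; apply: mf_sub.
    rewrite /Dtilde; apply: mf_bigmax => j _; apply: mf_mul; first exact: mf_cst.
    by apply: mf_Mnorm; apply: mfv_sub; apply: mfYb.
  rewrite /Dbar; apply: mf_mul; first exact: mf_cst.
  apply: mf_bigmax => j _; apply: mf_Mnorm; apply: mfv_sub; apply: mfv_scale;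
    apply: mfv_mull; apply: mfv_add; (apply: mfW1 || apply: mfW2); exact: ler0n.
have supset : forall (f : nat -> T -> R) (x : R), (forall k, measurable_fun setT (f k)) ->
    measurable [set w | (sup_after m f w <= x%:E)%E].
  move=> f x hf.
  rewrite (_ : [set w | _] = \bigcap_(k in [set k | (m < k)%N]) [set w | f k w <= x]).
    apply: bigcap_measurableType => k _; rewrite -[X in measurable X]setTI.
    exact: (measurable_fun_le measurableT (hf k) (mf_cst x)).
  apply/seteqP; split => w /=.
    by move/sup_after_le => H k /= mk; exact: H.
  by move=> H; apply/sup_after_le => k mk; exact: H.
set G1 := [set w | (sup_after m f1 w <= M1%:E)%E].
set G2 := [set w | ((g2 w)%:E <= M2%:E)%E].
set G0 := [set w | forall c, c \in enum 'I_p -> [set w | W1 m c 0 w = 0] w].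
set Tg := [set w | (`|sup_after m gk w| <= eps%:E)%E].
have hG1 : ((1 - delta / 2)%:E <= P G1)%E := HM1 m hm1.
have hG2 : ((1 - delta / 2)%:E <= P G2)%E := HM2 m hm2.
have mG1 : measurable G1 by exact: supset.
have mG2 : measurable G2.
  rewrite (_ : G2 = [set w | g2 w <= M2]).
    rewrite -[X in measurable X]setTI.
    exact: (measurable_fun_le measurableT mg2 (mf_cst M2)).
  by apply/seteqP; split => w; rewrite /G2 /= lee_fin.
have [mG0 hG0] : measurable G0 /\ ((1 - 0)%:E <= P G0)%E.
  apply: prob_all => c.
    have := mW1 c 0 (lexx 0) measurableT _ (measurable_set1 0); by rewrite setTI.
  by have [_ h _ _ _] := HB1 c.
have eTg : Tg = [set w | (sup_after m gk w <= eps%:E)%E].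
  have h0 : forall w, (0 <= sup_after m gk w)%E.
    move=> w; apply: sup_after_ge0 => k.
    by apply: mulr_ge0; [exact: powR_ge0|exact: normr_ge0].
  by apply/seteqP; split => w; rewrite /Tg /= gee0_abs.
have mTg : measurable Tg by rewrite eTg; exact: supset.
have hG : ((1 - (delta / 2 + delta / 2 + 0))%:E <= P (G1 `&` G2 `&` G0))%E.
  apply: probI2 => //; first exact: measurableI.
  exact: probI2.
have sub : G1 `&` G2 `&` G0 `<=` Tg.
  rewrite eTg => w [[hw1 hw2] hw0] /=; apply/sup_after_le => k mk.
  move: hw1; rewrite /G1 /= => /sup_after_le hw1.
  have {}hw2 : g2 w <= M2 by move: hw2; rewrite /G2 /= lee_fin.
  have W0 : Wv (W1 m) 0 w = 0.
    by apply/matrixP => a b; rewrite !mxE; apply: hw0; rewrite mem_enum.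
  have m1r : (1 : R) <= m%:R by rewrite ler1n.
  have mkr : (m%:R : R) <= k%:R by rewrite ler_nat ltnW.
  have kx0 : 0 <= k%:R `^ xi :> R by exact: powR_ge0.
  have powle : forall x : R, 0 <= x -> x <= k%:R -> x `^ xi <= k%:R `^ xi.
    move=> x x0 xk; have hx : x \is Num.nneg by rewrite nnegrE.
    have hk : (k%:R : R) \is Num.nneg by rewrite nnegrE ler0n.
    exact: (@ge0_ler_powR R _ (ltW xi0) x k%:R hx hk xk).
  have hE2 : norm2 (\sum_(1 <= i < m.+1) (Yv Y i w - meanv P Y) - Sh *m Wv (W2 m) m%:R w)
      <= `|M2| * k%:R `^ xi.
    move: hw2; rewrite /g2.
    set n := norm2 _; set a := m%:R `^ xi.
    have a0 : 0 < a by apply: powR_gt0; lra.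
    have aK : a <= k%:R `^ xi by apply: powle => //; lra.
    have n0 : 0 <= n by exact: norm2_ge0.
    have an : a * (a^-1 * n) = n by rewrite mulVKf // gt_eqF.
    have hM := ler_norm M2.
    move: an; set t := a^-1 * n => an ht.
    have Mp : 0 <= `|M2| by exact: normr_ge0.
    nra.
  have hE1 : forall j, (m < j <= k)%N ->
      norm2 (\sum_(m.+1 <= i < j.+1) (Yv Y i w - meanv P Y) - Sh *m Wv (W1 m) (j - m)%N%:R w)
      <= `|M1| * k%:R `^ xi.
    move=> j /andP[mj jk]; have := hw1 j mj; rewrite /f1.
    set n := norm2 _; set a := (j - m)%N%:R `^ xi.
    have a0 : 0 < a by apply: powR_gt0; rewrite ltr0n subn_gt0.
    have aK : a <= k%:R `^ xi.
      by apply: powle; [exact: ler0n|rewrite ler_nat; exact: leq_trans (leq_subr _ _) jk].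
    have n0 : 0 <= n by exact: norm2_ge0.
    have an : a * (a^-1 * n) = n by rewrite mulVKf // gt_eqF.
    have hM := ler_norm M1.
    move: an; set t := a^-1 * n => an ht.
    have Mp : 0 <= `|M1| by exact: normr_ge0.
    nra.
  have hB1 : 0 <= `|M1| * k%:R `^ xi by apply: mulr_ge0.
  have hB2 : 0 <= `|M2| * k%:R `^ xi by apply: mulr_ge0.
  have hmk : (1 <= m < k)%N by rewrite hmone mk.
  have D := det_bound Y (W1 m) (W2 m) Sh (invmx Sigma) (meanv P Y) w m k
    (`|M1| * k%:R `^ xi) (`|M2| * k%:R `^ xi) HSinv hmk hB1 hB2 W0 hE2 hE1.
  have eQ : Cst (invmx Sigma) * (`|M1| * k%:R `^ xi + `|M2| * k%:R `^ xi) = Q * k%:R `^ xi.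
    by rewrite /Q; ring.
  rewrite eQ in D.
  rewrite /gk; apply: le_trans (ler_wpM2l (powR_ge0 _ _) D) _.
  apply: le_trans (HN m hmN).
  exact: pow_final.
have mG : measurable (G1 `&` G2 `&` G0) by apply: measurableI => //; exact: measurableI.
apply: le_trans (le_measure P (mem_set mG) (mem_set mTg) sub).
apply: le_trans hG; rewrite lee_fin; lra.
Qed.
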